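(* Let $F$ be a field, $U,V$ finite-dimensional $F$-vector spaces with $\dim U=n$ and $\dim V=m$, $A:U\times U\to V$ an alternating bilinear map whose image spans $V$, $u_1<\dots<u_n$ an ordered basis of $U$, and $\mathcal{B}$, $W(\mathcal{B})$ as in the context. Let $r,t$ be non-negative integers with $\binom{n}{2}-m=\binom{r}{2}+t$ and $0\le t<r$. Then $W(\mathcal{B})$ contains at least $\binom{n}{3}-\binom{r}{3}-\binom{t}{2}$ linearly independent elements. In particular $\dim\operatorname{Im}\Psi\ge\binom{n}{3}-\binom{r}{3}-\binom{t}{2}$.
   Context: $\mathcal{Y}$ is the set of $2$-element subsets of $\{1,\dots,n\}$, totally ordered by $\{i,j\}<\{r,s\}$ iff $\max\{i,j\}<\max\{r,s\}$, or the maxima are equal to $a$ and the remaining element of $\{i,j\}\setminus\{a\}$ is smaller than that of $\{r,s\}\setminus\{a\}$. $\mathcal{B}$ is constructed as follows: $\mathcal{B}_0=B_0=\emptyset$; inductively let $\{i,j\}$ ($i<j$) be the least element of $\mathcal{Y}$ with $A(u_i,u_j)\notin\operatorname{span}(B_k)$, and set $\mathcal{B}_{k+1}=\mathcal{B}_k\cup\{\{i,j\}\}$, $B_{k+1}=B_k\cup\{A(u_i,u_j)\}$; stop at $k=m$ and put $\mathcal{B}=\mathcal{B}_m$. $\Psi:U\otimes_F U\otimes_F U\to V\otimes_F U$ is the linear map with $\Psi(x\otimes y\otimes z)=A(x,y)\otimes z+A(y,z)\otimes x+A(z,x)\otimes y$. $W(\mathcal{B})$ is the set of elements $\Psi(u_i\otimes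 u_j\otimes u_k)$ with $i<j<k$ such that $\{i,j,k\}$ contains a $2$-element subset belonging to $\mathcal{B}$. Binomial coefficients satisfy $\binom{a}{b}=0$ when $0\le a<b$. *)

(* Defs.v *)
From HB Require Import structures.
From mathcomp Require Import all_boot all_order all_algebra.
Set Implicit Arguments. Unset Strict Implicit. Unset Printing Implicit Defensive.
Import GRing.Theory.
Local Open Scope ring_scope.

Section Defs.
Variables (F : fieldType) (U V : vectType F).

(* Model of V (x)_F U : the canonical isomorphic space Hom(U^*, V),
   with v (x) z  |->  (phi |-> phi z *: v). *)
Definition tensVU := 'Hom('Hom(U, F^o), V).

Definition tens (v : V) (z : U) : tensVU :=
  linfun (fun phi : 'Hom(U, F^o) => (phi z : F) *: v).

Definition Psi3 (A : U -> U -> V) (x y z : U) : tensVU :=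
  tens (A x y) z + tens (A y z) x + tens (A z x) y.

Definition pairsY (n : nat) : seq ('I_n * 'I_n) :=
  flatten [seq [seq (i, j) | i <- [seq i : 'I_n <- enum 'I_n | (i < j)%N]] | j : 'I_n <- enum 'I_n].

Definition greedyB (A : U -> U -> V) (n : nat) (u : n.-tuple U)
  : seq ('I_n * 'I_n) :=
  foldl (fun Bk (p : 'I_n * 'I_n) =>
           if A (tnth u p.1) (tnth u p.2)
                \notin <<[seq A (tnth u q.1) (tnth u q.2) | q <- Bk]>>%VS
           then rcons Bk p else Bk) [::] (pairsY n).

Definition inWB (A : U -> U -> V) (n : nat) (u : n.-tuple U) (w : tensVU) : Prop :=
  exists i j k : 'I_n, [/\ (i < j)%N, (j < k)%N,
    ((i, j) \in greedyB A u) || ((i, k) \in greedyB A u) || ((j, k) \in greedyB A u)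
    & w = Psi3 A (tnth u i) (tnth u j) (tnth u k)].

End Defs.

(* Main.v *)
Require Import Defs.
From HB Require Import structures.
From mathcomp Require Import all_boot all_order all_algebra.
From mathcomp Require Import zify.
Set Implicit Arguments. Unset Strict Implicit. Unset Printing Implicit Defensive.
Import GRing.Theory.

Definition pr (n : nat) : seq (nat * nat) :=
  flatten [seq [seq (i, j) | i <- iota 0 j] | j <- iota 0 n].
Definition trip (n : nat) : seq (nat * nat * nat) :=
  flatten [seq [seq (q.1, q.2, k) | q <- pr k] | k <- iota 0 n].
Definition w2 (q : nat * nat) := 2 ^ q.1 + 2 ^ q.2.
Definition w3 (x : nat * nat * nat) := 2 ^ x.1.1 + 2 ^ x.1.2 + 2 ^ x.2.

Lemma prS n : pr n.+1 = pr n ++ [seq (i, n) | i <- iota 0 n].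
Proof. by rewrite /pr -addn1 iotaD map_cat flatten_cat /= cats0. Qed.

Lemma tripS n : trip n.+1 = trip n ++ [seq (q.1, q.2, n) | q <- pr n].
Proof. by rewrite /trip -addn1 iotaD map_cat flatten_cat /= cats0. Qed.

Lemma mem_pr n a b : ((a, b) \in pr n) = (a < b) && (b < n).
Proof.
elim: n => [|n IH]; first by rewrite /pr /= in_nil ltn0 andbF.
rewrite prS mem_cat IH.
have -> : ((a, b) \in [seq (i, n) | i <- iota 0 n]) = (b == n) && (a < n).
  apply/mapP/andP => [[i]|[/eqP -> H]].
    by rewrite mem_iota => Hi [-> ->]; split => //; lia.
  by exists a => //; rewrite mem_iota; lia.
lia.
Qed.

Lemma mem_trip n a b c : ((a, b, c) \in trip n) = [&& a < b, b < c & c < n].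
Proof.
elim: n => [|n IH]; first by rewrite /trip /= in_nil ltn0 !andbF.
rewrite tripS mem_cat IH.
have -> : ((a, b, c) \in [seq (q.1, q.2, n) | q <- pr n]) = [&& a < b, b < n & c == n].
  apply/mapP/idP => [[[i j]]|H].
    by rewrite mem_pr /= => Hi [-> -> ->]; rewrite eqxx andbT.
  by exists (a, b) => //=; [rewrite mem_pr; lia | move: H => /and3P [_ _ /eqP ->]].
lia.
Qed.

Lemma size_pr n : size (pr n) = 'C(n, 2).
Proof.
elim: n => [//|n IH]; rewrite prS size_cat IH size_map size_iota.
by rewrite binS bin1.
Qed.

Lemma size_trip n : size (trip n) = 'C(n, 3).
Proof.
elim: n => [//|n IH]; rewrite tripS size_cat IH size_map size_pr.
by rewrite binS.
Qed.

Lemma pow2_lt a b : a < b -> 2 ^ a < 2 ^ b.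
Proof. by move=> H; rewrite ltn_exp2l. Qed.

Lemma pow2_le a b : a <= b -> 2 ^ a <= 2 ^ b.
Proof. by move=> H; rewrite leq_exp2l. Qed.

Lemma w2_bound a b n : a < b -> b < n -> w2 (a, b) < 2 ^ n.
Proof.
move=> H1 H2; rewrite /w2 /=.
have h1 := pow2_lt H1. have h2 : 2 ^ b.+1 <= 2 ^ n by apply: pow2_le.
rewrite expnS in h2; lia.
Qed.

Lemma w3_bound a b c n : a < b -> b < c -> c < n -> w3 (a, b, c) < 2 ^ n.
Proof.
move=> H1 H2 H3; rewrite /w3 /=.
have h1 := w2_bound H1 H2. rewrite /w2 /= in h1.
have h2 : 2 ^ c.+1 <= 2 ^ n by apply: pow2_le.
rewrite expnS in h2; lia.
Qed.

Lemma sorted_pr n : sorted (fun p q => w2 p < w2 q) (pr n).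
Proof.
rewrite sorted_pairwise; last by move=> x y z; apply: ltn_trans.
elim: n => [//|n IH]; rewrite prS pairwise_cat IH /=.
apply/andP; split.
  apply/allrelP => [[a b] [i j]]; rewrite mem_pr => /andP [H1 H2] /mapP [k Hk [-> ->]].
  have := w2_bound H1 H2; rewrite /w2 /=; lia.
rewrite pairwise_map -sorted_pairwise; last by move=> x y z; apply: ltn_trans.
apply: (sub_sorted _ (iota_ltn_sorted 0 n)) => x y H /=.
rewrite /w2 /=; have := pow2_lt H; lia.
Qed.

Lemma sorted_trip n : sorted (fun p q => w3 p < w3 q) (trip n).
Proof.
rewrite sorted_pairwise; last by move=> x y z; apply: ltn_trans.
elim: n => [//|n IH]; rewrite tripS pairwise_cat IH /=.
apply/andP; split.
  apply/allrelP => [[[a b] c] [[i j] k]]; rewrite mem_trip => /and3P [H1 H2 H3] /mapP [[x y] Hk [-> -> ->]].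
  have := w3_bound H1 H2 H3; rewrite /w3 /=; lia.
rewrite pairwise_map -sorted_pairwise; last by move=> x y z; apply: ltn_trans.
apply: (sub_sorted _ (sorted_pr n)) => x y H /=.
by rewrite /w3 /=; move: H; rewrite /w2; lia.
Qed.

Lemma uniq_pr n : uniq (pr n).
Proof. apply: (sorted_uniq _ _ (sorted_pr n)); [move=> x y z; apply: ltn_trans|move=> x; apply: ltnn]. Qed.

Lemma bin2S x : 'C(x.+1, 2) = 'C(x, 2) + x.
Proof. by rewrite binS bin1. Qed.
Lemma bin3S x : 'C(x.+1, 3) = 'C(x, 3) + 'C(x, 2).
Proof. by rewrite binS. Qed.
Lemma pairs_count (f : nat -> bool) n :
  count (fun q => f q.1 && f q.2) (pr n) = 'C(count f (iota 0 n), 2).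
Proof.
elim: n => [//|n IH]; rewrite prS count_cat IH count_map.
have -> : iota 0 n.+1 = iota 0 n ++ [:: n] by rewrite -addn1 iotaD.
rewrite count_cat /= addn0.
have -> : count (preim (fun i => (i, n)) (fun q => f q.1 && f q.2)) (iota 0 n)
   = f n * count f (iota 0 n).
  case Hf: (f n).
    by rewrite mul1n; apply: eq_count => i /=; rewrite Hf andbT.
  by rewrite mul0n (@eq_count _ _ pred0) ?count_pred0 // => i /=; rewrite Hf andbF.
case: (f n); first by rewrite mul1n addn1 bin2S.
by rewrite mul0n !addn0.
Qed.

Lemma bin2E x : 2 * 'C(x, 2) = x * x.-1.
Proof. by elim: x => [//|x IH]; rewrite bin2S mulnDr IH; case: x {IH} => //= x; lia. Qed.

Lemma rep_uniq a b c e : b < a -> e < c -> 'C(a, 2) + b = 'C(c, 2) + e -> a = c /\ b = e.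
Proof.
move=> Hb He H.
case: (ltngtP a c) => Hac.
- have := leq_bin2l 2 Hac; rewrite bin2S; lia.
- have := leq_bin2l 2 Hac; rewrite bin2S; lia.
- subst; split => //; lia.
Qed.

Lemma rep_mono a b c e : b < a -> e < c -> 'C(a, 2) + b <= 'C(c, 2) + e -> a <= c.
Proof.
move=> Hb He H; rewrite leqNgt; apply/negP => Hca.
have := leq_bin2l 2 Hca; rewrite bin2S; lia.
Qed.

Lemma rep_ex N : exists r t, N = 'C(r, 2) + t /\ t < r.
Proof.
elim: N => [|N [r [t [-> Ht]]]]; first by exists 1, 0.
case: (ltnP t.+1 r) => H.
  by exists r, t.+1; split => //; lia.
exists r.+1, 0; split => //; rewrite bin2S; lia.
Qed.

Lemma convex2 lo hi x y : lo <= x -> x <= hi -> x + y = lo + hi ->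
  'C(x, 2) + 'C(y, 2) <= 'C(lo, 2) + 'C(hi, 2).
Proof.
move=> H1 H2 H3.
suff : 2 * ('C(x, 2) + 'C(y, 2)) <= 2 * ('C(lo, 2) + 'C(hi, 2)) by rewrite leq_pmul2l.
rewrite !mulnDr !bin2E.
have Hy : y = lo + hi - x by lia.
subst y.
case: x H1 H2 H3 => [|x] H1 H2 H3; case: lo H1 H2 H3 => [|lo] H1 H2 H3;
case: hi H1 H2 H3 => [|hi] H1 H2 H3 /=; nia.
Qed.

Lemma KKstep r t r' t' d X : t < r -> t' < r' ->
  'C(r', 2) + t' + d = 'C(r, 2) + t -> X <= 'C(d, 2) -> X <= 'C(r', 2) + t' ->
  'C(r', 3) + 'C(t', 2) + X <= 'C(r, 3) + 'C(t, 2).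
Proof.
move=> Ht Ht' HN HX1 HX2.
case: (leqP 'C(d, 2) ('C(r', 2) + t')) => Hd.
- have Hdr : d <= r'.
    rewrite leqNgt; apply/negP => Hc; have := leq_bin2l 2 Hc; rewrite bin2S; lia.
  case: (ltnP (t' + d) r') => Htd.
  + have [Er Et] : r = r' /\ t = t' + d by apply: rep_uniq => //; lia.
    subst. have := convex2 (lo := 0) (hi := t' + d) (x := t') (y := d).
    rewrite bin0n => C; have := C (leq0n _) (leq_addr _ _) (esym (add0n _)); lia.
  + have [Er Et] : r = r'.+1 /\ t = t' + d - r'.
      apply: rep_uniq => //; first lia. rewrite bin2S; lia.
    subst. rewrite bin3S.
    have := convex2 (lo := t' + d - r') (hi := r') (x := t') (y := d).
    move=> C; have := C ltac:(lia) ltac:(lia) ltac:(lia); lia.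
- have Hdr : r' < d.
    rewrite ltnNge; apply/negP => Hc; have := leq_bin2l 2 Hc; lia.
  have Hmono : r'.+1 <= r.
    apply: (rep_mono (b := t'.+1) (e := t)) => //; rewrite bin2S; lia.
  have E : 'C(r', 3) + 'C(t', 2) + ('C(r', 2) + t') = 'C(r'.+1, 3) + 'C(t'.+1, 2).
    rewrite bin3S bin2S; lia.
  suff : 'C(r'.+1, 3) + 'C(t'.+1, 2) <= 'C(r, 3) + 'C(t, 2) by lia.
  case: (ltngtP r'.+1 r) => Hr; last first.
  + subst r. have Htt : t'.+1 <= t.
 move: HN; rewrite bin2S. lia.
    rewrite leq_add2l. exact: (leq_bin2l 2 Htt).
  + lia.
  + have h1 : 'C(r'.+2, 3) <= 'C(r, 3) := leq_bin2l 3 Hr.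
    have h2 : 'C(t'.+1, 2) <= 'C(r'.+1, 2) by apply: leq_bin2l; apply: ltnW.
    move: h1; rewrite bin3S; lia.
Qed.

Lemma KK (h : nat -> nat -> bool) n r t :
  count (fun q => h q.1 q.2) (pr n) = 'C(r, 2) + t -> t < r ->
  count (fun x => [&& h x.1.1 x.1.2, h x.1.1 x.2 & h x.1.2 x.2]) (trip n)
    <= 'C(r, 3) + 'C(t, 2).
Proof.
elim: n r t => [|n IH] r t.
  by rewrite /trip /= => _ _; apply: leq0n.
rewrite prS tripS !count_cat => He Htr.
have [r' [t' [Er' Ht']]] := rep_ex (count (fun q => h q.1 q.2) (pr n)).
have IHn := IH r' t' Er' Ht'.
have Hd : count (fun q => h q.1 q.2) [seq (i, n) | i <- iota 0 n]
   = count (fun i => h i n) (iota 0 n) by rewrite count_map.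
set X := count _ [seq (q.1, q.2, n) | q <- pr n].
have HX1 : X <= 'C(count (fun i => h i n) (iota 0 n), 2).
  rewrite /X count_map -pairs_count; apply: sub_count => q /=; case/and3P => _ -> ->. by [].
have HX2 : X <= 'C(r', 2) + t'.
  rewrite /X count_map -Er'; apply: sub_count => q /=; by case/and3P.
have := KKstep Htr Ht' (d := count (fun i => h i n) (iota 0 n)) (X := X) ltac:(lia) HX1 HX2.
lia.
Qed.

Local Open Scope ring_scope.

Lemma linfunE' (R : fieldType) (aT rT : vectType R) (f : aT -> rT)
  (lf : forall a x y, f (a *: x + y) = a *: f x + f y) x : linfun f x = f x.
Proof.
have lf' : linear f by move=> a x' y'; exact: lf.
pose ff : {linear aT -> rT} := HB.pack f (GRing.isLinear.Build _ _ _ _ f lf').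
exact: (lfunE ff x).
Qed.

Section LA.
Variables (F : fieldType) (U V : vectType F) (A : U -> U -> V) (n : nat) (u : n.-tuple U).
Hypothesis HA1 : forall (a : F) (x y z : U), A (a *: x + y) z = a *: A x z + A y z.
Hypothesis HA2 : forall (a : F) (x y z : U), A x (a *: y + z) = a *: A x y + A x z.
Hypothesis HA3 : forall x : U, A x x = 0.

Lemma AaddL x y z : A (x + y) z = A x z + A y z.
Proof. by have := HA1 1 x y z; rewrite !scale1r. Qed.
Lemma AaddR x y z : A x (y + z) = A x y + A x z.
Proof. by have := HA2 1 x y z; rewrite !scale1r. Qed.
Lemma A0L z : A 0 z = 0.
Proof. have := AaddL 0 0 z; rewrite addr0 => H; apply/(addrI (A 0 z)); by rewrite -H addr0. Qed.
Lemma A0R z : A z 0 = 0.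
Proof. have := AaddR z 0 0; rewrite addr0 => H; apply/(addrI (A z 0)); by rewrite -H addr0. Qed.
Lemma AscL a x z : A (a *: x) z = a *: A x z.
Proof. by have := HA1 a x 0 z; rewrite addr0 A0L addr0. Qed.
Lemma AscR a x z : A z (a *: x) = a *: A z x.
Proof. by have := HA2 a z x 0; rewrite addr0 A0R addr0. Qed.
Lemma Aanti x y : A y x = - A x y.
Proof.
have := HA3 (x + y); rewrite AaddL !AaddR !HA3 add0r addr0 => /eqP.
by rewrite addr_eq0 => /eqP ->; rewrite opprK.
Qed.

Definition Av (p : 'I_n * 'I_n) := A (tnth u p.1) (tnth u p.2).
Definition gstep (Bk : seq ('I_n * 'I_n)) (p : 'I_n * 'I_n) :=
  if Av p \notin <<[seq Av q | q <- Bk]>>%VS then rcons Bk p else Bk.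

Lemma greedyE : greedyB A u = foldl gstep [::] (pairsY n).
Proof. by []. Qed.

Lemma span_step Bk p : <<[seq Av q | q <- gstep Bk p]>>%VS = (<<[seq Av q | q <- Bk]>> + <[Av p]>)%VS.
Proof.
rewrite /gstep; case: ifP => H.
  by rewrite map_rcons -cats1 span_cat span_seq1.
by move/negbFE: H => H; apply/esym/addv_idPl; rewrite -memvE.
Qed.

Lemma greedy_span L Bk :
  <<[seq Av q | q <- foldl gstep Bk L]>>%VS = (<<[seq Av q | q <- Bk]>> + <<[seq Av q | q <- L]>>)%VS.
Proof.
elim: L Bk => [|p L IH] Bk /=; first by rewrite span_nil addv0.
by rewrite IH span_step span_cons addvA.
Qed.

Lemma greedy_free L Bk : free [seq Av q | q <- Bk] -> free [seq Av q | q <- foldl gstep Bk L].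
Proof.
elim: L Bk => [|p L IH] Bk //= H; apply: IH.
rewrite /gstep; case: ifP => // Hp.
have P : perm_eq (rcons [seq Av q | q <- Bk] (Av p)) (Av p :: [seq Av q | q <- Bk]) by rewrite perm_rcons perm_refl.
by rewrite map_rcons (perm_free P) free_cons Hp H.
Qed.

Lemma greedy_mem L Bk p : p \in foldl gstep Bk L ->
  p \in Bk \/ exists pre suf, L = pre ++ p :: suf /\
     Av p \notin (<<[seq Av q | q <- Bk]>> + <<[seq Av q | q <- pre]>>)%VS.
Proof.
elim: L Bk => [|x L IH] Bk /=; first by left.
move/IH => [H|[pre [suf [-> H]]]].
  move: H; rewrite /gstep; case: ifP => Hx; last by left.
  rewrite mem_rcons in_cons => /orP [/eqP ->|]; last by left.
  right; exists [::], L; split => //. by rewrite span_nil addv0.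
right; exists (x :: pre), suf; split => //.
by move: H; rewrite span_step span_cons addvA.
Qed.


Definition vp (p : 'I_n * 'I_n) : nat * nat := (val p.1, val p.2).

Lemma vp_inj : injective vp.
Proof. by move=> [a b] [c d] [/val_inj -> /val_inj ->]. Qed.

Lemma filter_iota_lt j m : (j <= m)%N -> [seq x <- iota 0 m | (x < j)%N] = iota 0 j.
Proof.
elim: m => [|m IH] Hj; first by move: Hj; rewrite leqn0 => /eqP ->.
rewrite -addn1 iotaD filter_cat /= add0n.
case: (ltnP m j) => Hmj.
  have Ej : j = m.+1 by apply/eqP; rewrite eqn_leq Hj Hmj.
  subst j. have -> : iota 0 m.+1 = iota 0 m ++ [:: m] by rewrite -addn1 iotaD.
  congr (_ ++ _).
  apply/all_filterP/allP => x; rewrite mem_iota; lia.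
by rewrite cats0 IH.
Qed.

Lemma inner_vp (j : 'I_n) : [seq vp p | p <- [seq (i, j) | i <- [seq i : 'I_n <- enum 'I_n | (i < j)%N]]]
   = [seq (i, val j) | i <- iota 0 j].
Proof.
rewrite -map_comp.
transitivity [seq (x, val j) | x <- [seq val i | i <- [seq i : 'I_n <- enum 'I_n | (i < j)%N]]].
  by rewrite -map_comp.
congr map.
have -> : [seq i : 'I_n <- enum 'I_n | (i < j)%N] = filter (preim val (fun x => (x < j)%N)) (enum 'I_n) by [].
by rewrite -filter_map val_enum_ord filter_iota_lt // ltnW.
Qed.

Lemma map_vp_pairsY : [seq vp p | p <- pairsY n] = pr n.
Proof.
rewrite /pairsY /pr map_flatten -map_comp.
rewrite (eq_map (g := (fun j : 'I_n => [seq (i, val j) | i <- iota 0 j])) inner_vp).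
have -> : [seq [seq (i, val j) | i <- iota 0 j] | j : 'I_n <- enum 'I_n]
   = [seq [seq (i, j) | i <- iota 0 j] | j <- [seq val j | j : 'I_n <- enum 'I_n]].
  by rewrite -map_comp.
by rewrite val_enum_ord.
Qed.

Lemma mem_pairsY (i j : 'I_n) : ((i, j) \in pairsY n) = (i < j)%N.
Proof.
by rewrite -(mem_map vp_inj) map_vp_pairsY mem_pr ltn_ord andbT.
Qed.

Lemma Av_nth (p : 'I_n * 'I_n) : Av p = A u`_(vp p).1 u`_(vp p).2.
Proof. by rewrite /Av !(tnth_nth 0). Qed.

Hypothesis Hspan : forall S : {vspace V}, (forall x y : U, A x y \in S) -> S = fullv.
Hypothesis Hbas : basis_of fullv u.

Lemma span_pairsY : <<[seq Av q | q <- pairsY n]>>%VS = fullv.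
Proof.
apply: Hspan => x y.
set S0 := <<_>>%VS.
have Huij : forall i j : 'I_n, A u`_i u`_j \in S0.
  move=> i j; case: (ltngtP i j) => Hij.
  - have -> : A u`_i u`_j = Av (i, j) by rewrite Av_nth.
    by apply: memv_span; apply: map_f; rewrite mem_pairsY.
  - rewrite Aanti memvN.
    have -> : A u`_j u`_i = Av (j, i) by rewrite Av_nth.
    by apply: memv_span; apply: map_f; rewrite mem_pairsY.
  - by rewrite (val_inj Hij) HA3 mem0v.
have Hsp : <<u>>%VS = fullv by case/andP: Hbas => /eqP.
have Hi : forall (i : 'I_n) z, A u`_i z \in S0.
  move=> i z; have : z \in <<u>>%VS by rewrite Hsp memvf.
  move/coord_span ->.
  elim/big_ind: _ => [|a b Ha Hb|j _]; first by rewrite A0R mem0v.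
    by rewrite AaddR memvD.
  by rewrite AscR memvZ.
have : x \in <<u>>%VS by rewrite Hsp memvf.
move/coord_span ->.
elim/big_ind: _ => [|a b Ha Hb|j _]; first by rewrite A0L mem0v.
  by rewrite AaddL memvD.
by rewrite AscL memvZ.
Qed.

Lemma free_greedy : free [seq Av q | q <- greedyB A u].
Proof. by rewrite greedyE; apply: greedy_free; rewrite /= nil_free. Qed.

Lemma size_greedy : size (greedyB A u) = \dim (fullv : {vspace V}).
Proof.
have Hs : <<[seq Av q | q <- greedyB A u]>>%VS = fullv.
  by rewrite greedyE greedy_span /= span_nil add0v span_pairsY.
by rewrite -Hs (eqP free_greedy) size_map.
Qed.

Definition An (a b : nat) := A u`_a u`_b.
Definition Vlt (p : nat * nat) : {vspace V} :=
  <<[seq An q.1 q.2 | q <- pr n & (w2 q < w2 p)%N]>>%VS.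

Lemma N2 a b : (a, b) \in [seq vp p | p <- greedyB A u] -> An a b \notin Vlt (a, b).
Proof.
case/mapP => p Hp Eab.
move: Hp; rewrite greedyE => /greedy_mem [//|[pre [suf [EL Hnot]]]].
rewrite /= span_nil add0v in Hnot.
apply: contra Hnot => Hin.
have -> : Av p = An a b by rewrite Av_nth -Eab.
suff Hsub : (Vlt (a, b) <= <<[seq Av q | q <- pre]>>)%VS by exact: (subvP Hsub _ Hin).
apply/span_subvP => v /mapP [q]; rewrite mem_filter => /andP [Hw Hq] ->.
have Hpr := map_vp_pairsY; rewrite EL map_cat /= -Eab in Hpr.
have Hs := sorted_pr n; rewrite -Hpr sorted_cat_cons in Hs; case/andP: Hs => _ Hpath.
have Htr : transitive (fun p q : nat * nat => (w2 p < w2 q)%N) by move=> y x z; apply: ltn_trans.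
have Hall := order_path_min Htr Hpath.
move: Hq; rewrite -Hpr mem_cat in_cons => /or3P [Hq|/eqP Hq|Hq].
- case/mapP: Hq => p' Hp' ->. rewrite /An -Av_nth. apply: memv_span. exact: map_f.
- by move: Hw; rewrite Hq ltnn.
- by move/allP: Hall => /(_ q Hq); rewrite ltnNge ltnW.
Qed.


Lemma free_u : free u.
Proof. exact: basis_free Hbas. Qed.

Definition phi (l : 'I_n) : 'Hom(U, F^o) := @linfun _ U F^o (coord u l).

Lemma phiE (l : 'I_n) b : (b < n)%N -> phi l u`_b = (b == val l)%:R.
Proof.
move=> Hb; rewrite /phi lfunE /=.
have -> : u`_b = u`_(Ordinal Hb) by [].
by rewrite coord_free ?free_u // -(inj_eq val_inj).
Qed.

Definition ev (l : 'I_n) : 'Hom(tensVU U V, V) := linfun (fun f : tensVU U V => f (phi l)).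

Lemma evE l f : ev l f = f (phi l).
Proof. by rewrite /ev linfunE' // => a x y; rewrite add_lfunE scale_lfunE. Qed.

Lemma tensE (v : V) (z : U) (g : 'Hom(U, F^o)) : tens v z g = g z *: v.
Proof.
rewrite /tens linfunE' // => a x y.
by rewrite add_lfunE scale_lfunE scalerDl scalerA.
Qed.

Definition PsiN (x : nat * nat * nat) := Psi3 A u`_x.1.1 u`_x.1.2 u`_x.2.

Lemma ev_Psi (l : 'I_n) a b c : (a < n)%N -> (b < n)%N -> (c < n)%N ->
  ev l (PsiN (a, b, c)) = (c == val l)%:R *: An a b + (a == val l)%:R *: An b c
     + (b == val l)%:R *: A u`_c u`_a.
Proof.
move=> Ha Hb Hc.
by rewrite evE /PsiN /Psi3 /= !add_lfunE !tensE !phiE.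
Qed.

Lemma EVY y p0 l0 (Hl : (l0 < n)%N) : y \in trip n -> (w3 y < w2 p0 + 2 ^ l0)%N ->
  ev (Ordinal Hl) (PsiN y) \in Vlt p0.
Proof.
case: y => [[i j] k]; rewrite mem_trip => /and3P [Hij Hjk Hkn] Hw.
rewrite ev_Psi /=; try lia.
rewrite /w3 /w2 /= in Hw.
have Hmem : forall q, (q.1 < q.2 < n)%N -> (w2 q < w2 p0)%N -> An q.1 q.2 \in Vlt p0.
  move=> [q1 q2] /= Hq Hwq; apply: memv_span.
  by apply/mapP; exists (q1, q2) => //; rewrite mem_filter Hwq mem_pr.
rewrite !memvD //.
- case: eqP => E; last by rewrite scale0r mem0v.
  subst; rewrite scale1r; apply: (Hmem (i, j)) => /=; rewrite /w2 /=; lia.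
- case: eqP => E; last by rewrite scale0r mem0v.
  subst; rewrite scale1r; apply: (Hmem (j, k)) => /=; rewrite /w2 /=; lia.
- case: eqP => E; last by rewrite scale0r mem0v.
  subst; rewrite scale1r Aanti memvN; apply: (Hmem (i, k)) => /=; rewrite /w2 /=; lia.
Qed.

Definition Bn := [seq vp p | p <- greedyB A u].
Definition hasB (x : nat * nat * nat) :=
  [|| (x.1.1, x.1.2) \in Bn, (x.1.1, x.2) \in Bn | (x.1.2, x.2) \in Bn].

Lemma notin_span x Y : x \in trip n -> hasB x ->
  {in Y, forall y, y \in trip n /\ (w3 y < w3 x)%N} ->
  PsiN x \notin <<[seq PsiN y | y <- Y]>>%VS.
Proof.
case: x => [[a b] c]; rewrite mem_trip => /and3P [Hab Hbc Hcn] HB HY.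
have gen : forall p0 l0 (Hl : (l0 < n)%N), p0 \in Bn -> w3 (a, b, c) = (w2 p0 + 2 ^ l0)%N ->
    (ev (Ordinal Hl) (PsiN (a, b, c)) = An p0.1 p0.2 \/
     ev (Ordinal Hl) (PsiN (a, b, c)) = - An p0.1 p0.2) ->
    PsiN (a, b, c) \notin <<[seq PsiN y | y <- Y]>>%VS.
  move=> [p1 p2] l0 Hl Hp Hw Hev; apply/negP => Hin.
  have Hv : ev (Ordinal Hl) (PsiN (a, b, c)) \in Vlt (p1, p2).
    have := memv_img (ev (Ordinal Hl)) Hin; rewrite limg_span.
    apply: subvP; apply/span_subvP => v /mapP [f /mapP [y Hy ->] ->].
    have [Hyt Hyw] := HY y Hy.
    by apply: EVY => //; rewrite -Hw.
  have := N2 Hp.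
  by case: Hev => Hev; rewrite Hev ?memvN /= in Hv; rewrite Hv.
have ne : forall x y : nat, (x < y)%N -> (x == y) = false.
  by move=> x y H; apply/eqP; lia.
have ne' : forall x y : nat, (y < x)%N -> (x == y) = false.
  by move=> x y H; apply/eqP; lia.
case/or3P: HB => Hp.
- apply: (gen (a, b) c Hcn Hp); first by rewrite /w3 /w2.
  left; rewrite ev_Psi /=; try lia.
  have h1 : (a == c) = false by apply/eqP; lia.
  have h2 : (b == c) = false by apply/eqP; lia.
  rewrite eqxx h1 h2.
  by rewrite scale1r !scale0r !addr0.
- have Hbn : (b < n)%N by lia.
  apply: (gen (a, c) b Hbn Hp); first by rewrite /w3 /w2 /=; lia.
  right; rewrite ev_Psi /=; try lia.
  have h1 : (c == b) = false by apply/eqP; lia.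
  have h2 : (a == b) = false by apply/eqP; lia.
  rewrite eqxx h1 h2.
  by rewrite scale1r !scale0r !add0r Aanti.
- have Han : (a < n)%N by lia.
  apply: (gen (b, c) a Han Hp); first by rewrite /w3 /w2 /=; lia.
  left; rewrite ev_Psi /=; try lia.
  have h1 : (c == a) = false by apply/eqP; lia.
  have h2 : (b == a) = false by apply/eqP; lia.
  rewrite eqxx h1 h2.
  by rewrite scale1r !scale0r add0r addr0.
Qed.

Lemma free_sorted Y : sorted (fun x y => (w3 y < w3 x)%N) Y ->
  all (fun x => (x \in trip n) && hasB x) Y -> free [seq PsiN y | y <- Y].
Proof.
elim: Y => [|x Y IH] Hs Hall; first by rewrite /= nil_free.
move: Hall => /= /andP [/andP [Hx HBx] Hall].
rewrite free_cons; apply/andP; split; last by apply: IH => //; exact: path_sorted Hs.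
apply: notin_span => // y Hy.
have Htr : transitive (fun x y : nat * nat * nat => (w3 y < w3 x)%N).
  by move=> q p r H1 H2; apply: ltn_trans H1.
have := order_path_min Htr Hs => /allP /(_ y Hy) ->.
by move/allP: Hall => /(_ y Hy) /andP [-> _].
Qed.


Lemma inB a b (Ha : (a < n)%N) (Hb : (b < n)%N) :
  (a, b) \in Bn -> (Ordinal Ha, Ordinal Hb) \in greedyB A u.
Proof. by rewrite -(mem_map vp_inj). Qed.

Lemma main_sec m r t : \dim (fullv : {vspace V}) = m ->
  'C(n, 2) = (m + 'C(r, 2) + t)%N -> (t < r)%N ->
  (exists s : seq (tensVU U V),
      [/\ {in s, forall w, inWB A u w}, free s
        & size s = ('C(n, 3) - 'C(r, 3) - 'C(t, 2))%N])
  /\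
  (forall S : {vspace tensVU U V},
      (forall x y z : U, Psi3 A x y z \in S) ->
      ('C(n, 3) - 'C(r, 3) - 'C(t, 2) <= \dim S)%N).
Proof.
move=> Hdim Hn Htr.
set K := ('C(n, 3) - 'C(r, 3) - 'C(t, 2))%N.
set Tl := [seq x <- trip n | hasB x].
have HBsize : size Bn = m by rewrite size_map size_greedy.
have Buniq : uniq Bn.
  rewrite (map_inj_uniq vp_inj); apply: (@map_uniq _ _ Av).
  exact: free_uniq free_greedy.
have Bsub : {subset Bn <= pr n}.
  move=> x /mapP [p Hp ->]; rewrite -map_vp_pairsY; apply: map_f.
  move: Hp; rewrite greedyE => /greedy_mem [//|[pre [suf [-> _]]]].
  by rewrite mem_cat in_cons eqxx orbT.
have Hcnt : count (mem Bn) (pr n) = m.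
  rewrite -size_filter -HBsize; apply/perm_size/uniq_perm.
  - by rewrite filter_uniq // uniq_pr.
  - exact: Buniq.
  - move=> x; rewrite mem_filter; apply/andP/idP => [[]//|H]; split => //.
    exact: Bsub.
have He : count (fun q => (q.1, q.2) \notin Bn) (pr n) = ('C(r, 2) + t)%N.
  have := count_predC (mem Bn) (pr n); rewrite size_pr Hcnt.
  have -> : count (predC (mem Bn)) (pr n) = count (fun q => (q.1, q.2) \notin Bn) (pr n).
    by apply: eq_count => -[].
  lia.
have Htri := @KK (fun a b => (a, b) \notin Bn) n r t He Htr.
have Hsize : (K <= size Tl)%N.
  rewrite size_filter.
  have := count_predC hasB (trip n); rewrite size_trip.
  have -> : count (predC hasB) (trip n) =
     count (fun x => [&& (x.1.1, x.1.2) \notin Bn, (x.1.1, x.2) \notin Bn & (x.1.2, x.2) \notin Bn]) (trip n).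
    by apply: eq_count => x /=; rewrite /hasB !negb_or.
  set c2 := count (fun x => [&& _, _ & _]) (trip n) in Htri *.
  have E1 : count [eta hasB] (trip n) = count hasB (trip n) by [].
  rewrite /K E1; lia.
set Xs := take K Tl.
have XsTl : {subset Xs <= Tl} by move=> x; apply: mem_take.
have Hfree : free [seq PsiN y | y <- Xs].
  have Hsrt : sorted (fun x y => (w3 x < w3 y)%N) Xs.
    apply: (subseq_sorted (leT := fun x y => (w3 x < w3 y)%N)).
    - by move=> y x z; apply: ltn_trans.
    - exact: subseq_trans (take_subseq Tl K) (filter_subseq _ _).
    - exact: sorted_trip.
  have := @free_sorted (rev Xs).
  rewrite rev_sorted map_rev.
  have P : perm_eq (rev [seq PsiN y | y <- Xs]) [seq PsiN y | y <- Xs] by rewrite perm_rev perm_refl.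
  rewrite (perm_free P); apply => //.
  apply/allP => x; rewrite mem_rev => /XsTl; rewrite mem_filter => /andP [-> ->] //.
have Hsz : size [seq PsiN y | y <- Xs] = K by rewrite size_map size_takel.
split; last first.
  move=> S HS; rewrite -Hsz -(eqP Hfree); apply: dimvS.
  by apply/span_subvP => w /mapP [x _ ->]; apply: HS.
exists [seq PsiN y | y <- Xs]; split => //.
move=> w /mapP [[[a b] c] /XsTl]; rewrite mem_filter => /andP [HB].
rewrite mem_trip => /and3P [Hab Hbc Hcn] ->.
have Ha : (a < n)%N by lia.
have Hb : (b < n)%N by lia.
exists (Ordinal Ha), (Ordinal Hb), (Ordinal Hcn); split => //.
  by case/or3P: HB => H; rewrite ?(inB Ha Hb H) ?(inB Ha Hcn H) ?(inB Hb Hcn H) ?orbT.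
by rewrite /PsiN /= !(tnth_nth 0).
Qed.


End LA.

Theorem proposition2p8 (F : fieldType) (U V : vectType F)
  (A : U -> U -> V) (n m : nat) (u : n.-tuple U) (r t : nat) :
  (forall (a : F) (x y z : U), A (a *: x + y) z = a *: A x z + A y z) ->
  (forall (a : F) (x y z : U), A x (a *: y + z) = a *: A x y + A x z) ->
  (forall x : U, A x x = 0) ->
  (forall S : {vspace V}, (forall x y : U, A x y \in S) -> S = fullv) ->
  basis_of fullv u ->
  \dim (fullv : {vspace V}) = m ->
  'C(n, 2) = (m + 'C(r, 2) + t)%N ->
  (t < r)%N ->
  (exists s : seq (tensVU U V),
      [/\ {in s, forall w, inWB A u w}, free s
        & size s = ('C(n, 3) - 'C(r, 3) - 'C(t, 2))%N])
  /\
  (forall S : {vspace tensVU U V},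
      (forall x y z : U, Psi3 A x y z \in S) ->
      ('C(n, 3) - 'C(r, 3) - 'C(t, 2) <= \dim S)%N).
Proof.
move=> H1 H2 H3 H4 H5 H6 H7 H8.
exact: (main_sec H1 H2 H3 H4 H5 H6 H7 H8).
Qed.
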